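(* Let $\mathbb{X}$ be a two-dimensional real Banach space. Suppose that every $T\in\mathbb{L}(\mathbb{X})$ with $\|T\|=1$ which attains its norm at (at least) two linearly independent vectors is an extreme contraction. Then $\mathbb{X}$ is strictly convex.
   Context: $T$ attains its norm at $u$ if $\|u\|=1$ and $\|Tu\|=\|T\|$. An extreme contraction is a norm one operator that is an extreme point of the closed unit ball of $\mathbb{L}(\mathbb{X})$. *)

(* Defs.v *)
From HB Require Import structures.
From mathcomp Require Import all_boot all_order all_algebra.
From mathcomp Require Import boolp classical_sets reals.
Set Implicit Arguments. Unset Strict Implicit. Unset Printing Implicit Defensive.
Import Order.TTheory GRing.Theory Num.Theory.
Local Open Scope ring_scope.
Local Open Scope classical_set_scope.

(* A two-dimensional real normed space is modelled as 'rV[R]_2 with an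
   arbitrary norm N (every 2-dim real normed space is isometric to such a
   space; completeness is automatic in finite dimension). *)
Definition is_norm (R : realType) (N : 'rV[R]_2 -> R) : Prop :=
  [/\ forall x, N x = 0 -> x = 0,
      forall (a : R) x, N (a *: x) = `|a| * N x
    & forall x y, N (x + y) <= N x + N y].

(* Linear operators on X are 2x2 matrices acting on row vectors: x |-> x *m T. *)
Definition opnorm (R : realType) (N : 'rV[R]_2 -> R) (T : 'M[R]_2) : R :=
  sup [set N (x *m T) | x in [set x | N x <= 1]].

Definition attains_norm (R : realType) (N : 'rV[R]_2 -> R) (T : 'M[R]_2)
  (u : 'rV[R]_2) : Prop :=
  N u = 1 /\ N (u *m T) = opnorm N T.

Definition lin_indep2 (R : realType) (u v : 'rV[R]_2) : Prop :=
  forall a b : R, a *: u + b *: v = 0 -> a = 0 /\ b = 0.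

Definition extreme_point_unit_ball (R : realType) (N : 'rV[R]_2 -> R)
  (T : 'M[R]_2) : Prop :=
  opnorm N T <= 1 /\
  forall (A B : 'M[R]_2) (t : R), opnorm N A <= 1 -> opnorm N B <= 1 ->
    0 < t < 1 -> T = t *: A + (1 - t) *: B -> A = T /\ B = T.

Definition extreme_contraction (R : realType) (N : 'rV[R]_2 -> R)
  (T : 'M[R]_2) : Prop :=
  opnorm N T = 1 /\ extreme_point_unit_ball N T.

Definition strictly_convex (R : realType) (N : 'rV[R]_2 -> R) : Prop :=
  forall (x y : 'rV[R]_2) (t : R), N x = 1 -> N y = 1 -> x <> y ->
    0 < t < 1 -> N (t *: x + (1 - t) *: y) < 1.

(* Main.v *)
Require Import Defs.
From HB Require Import structures.
From mathcomp Require Import all_boot all_order all_algebra.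
From mathcomp Require Import boolp classical_sets reals.
From mathcomp Require Import ring lra.
Import Order.TTheory GRing.Theory Num.Theory.
Local Open Scope ring_scope.
Local Open Scope classical_set_scope.

Lemma rv2P (R : realType) (u v : 'rV[R]_2) :
  u 0 0 = v 0 0 -> u 0 1 = v 0 1 -> u = v.
Proof.
move=> h0 h1; apply/rowP => j.
case: j => [[|[|//]] Hj].
  by have -> : Ordinal Hj = 0 :> 'I_2 by apply/val_inj.
by have -> : Ordinal Hj = 1 :> 'I_2 by apply/val_inj.
Qed.

Definition Amx (R : realType) (c1 c2 : R) (z : 'rV[R]_2) : 'M[R]_2 :=
  \matrix_(i, j) ((if i == 0 then c1 else c2) * z 0 j).

Arguments Amx {R}.

Lemma mulA (R : realType) (c1 c2 : R) (z w : 'rV[R]_2) :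
  w *m Amx c1 c2 z = (w 0 0 * c1 + w 0 1 * c2) *: z.
Proof.
apply/rowP => j; rewrite !mxE !big_ord_recl big_ord0 !mxE /=.
rewrite addr0.
have -> : lift ord0 ord0 = 1 :> 'I_2 by apply/val_inj.
have -> : ord0 = 0 :> 'I_2 by apply/val_inj.
ring.
Qed.

Section S.
Lemma Nbasic (R : realType) (N : 'rV[R]_2 -> R) (hN : is_norm N) :
  [/\ N 0 = 0, forall x, 0 <= N x & forall a x, N (a *: x) = `|a| * N x].
Proof.
case: hN => h1 h2 h3.
have N0 : N 0 = 0 by rewrite -(scale0r 0) h2 normr0 mul0r.
split => // x.
have := h3 x (-x); rewrite subrr N0 -scaleN1r h2 normrN normr1 mul1r.
lra.
Qed.
End S.

Theorem mainTheorem18 (R : realType) (N : 'rV[R]_2 -> R) (hN : is_norm N) :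
  (forall T : 'M[R]_2, opnorm N T = 1 ->
     (exists u v : 'rV[R]_2, lin_indep2 u v /\ attains_norm N T u /\ attains_norm N T v) ->
     extreme_contraction N T) ->
  strictly_convex N.
Proof.
move=> H x y t Nx Ny xy /andP[t0 t1].
have [N0 Nge0 NZ] := @Nbasic R N hN.
case: hN => _ _ Ntri.
rewrite ltNge; apply/negP => Hm.
pose p := fun l : R => l *: x + (1 - l) *: y.
have Ncvx : forall a b u v, 0 <= a -> 0 <= b ->
    N (a *: u + b *: v) <= a * N u + b * N v.
  move=> a b u v a0 b0; apply: le_trans (Ntri _ _) _.
  by rewrite !NZ !ger0_norm.
have G : forall th P U Q, 0 < th -> th <= 1 -> P = th *: U + (1 - th) *: Q ->
    1 <= N P -> N Q <= 1 -> 1 <= N U.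
  move=> th P U Q th0 th1 -> HP HQ.
  have h := Ncvx th (1 - th) U Q (ltW th0) (ltac:(lra)).
  have := Nge0 U; have := Nge0 Q; nra.
have L : forall l, 1 <= N (p l).
  move=> l; case: (lerP l t) => hl.
  - apply: (G ((1 - t)/(1 - l)) (p t) (p l) x) => //.
    + apply: divr_gt0; lra.
    + rewrite ler_pdivrMr; lra.
    + apply: rv2P; rewrite !mxE; field; apply/negP => /eqP h; lra.
    + by rewrite Nx.
  - apply: (G (t / l) (p t) (p l) y) => //.
    + apply: divr_gt0; lra.
    + rewrite ler_pdivrMr; lra.
    + apply: rv2P; rewrite !mxE; field; apply/negP => /eqP h; lra.
    + by rewrite Ny.
have K : forall a b, a * x 0 0 + b * y 0 0 = 0 -> a * x 0 1 + b * y 0 1 = 0 ->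
    a = 0 /\ b = 0.
  move=> a b e1 e2.
  have [ab|ab] := eqVneq (a + b) 0.
  - have b_ : b = - a by lra.
    have [a0|a0] := eqVneq a 0; first by split => //; lra.
    exfalso; apply: xy; apply: rv2P; apply/(mulfI a0); nra.
  - have := L (a / (a + b)).
    have -> : p (a / (a + b)) = 0.
      apply: rv2P; rewrite !mxE.
      + have -> : a / (a + b) * x 0 0 + (1 - a / (a + b)) * y 0 0
                 = (a * x 0 0 + b * y 0 0) / (a + b) by field.
        by rewrite e1 mul0r.
      + have -> : a / (a + b) * x 0 1 + (1 - a / (a + b)) * y 0 1
                 = (a * x 0 1 + b * y 0 1) / (a + b) by field.
        by rewrite e2 mul0r.
    rewrite N0; lra.
pose d := x 0 0 * y 0 1 - x 0 1 * y 0 0.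
have d0 : d != 0.
  apply/eqP => d0.
  have [h1 h2] := K (y 0 1) (- x 0 1) ltac:(rewrite /d in d0; nra) ltac:(nra).
  have [h3 h4] := K (- y 0 0) (x 0 0) ltac:(nra) ltac:(rewrite /d in d0; nra).
  have x0 : x = 0 by apply: rv2P; rewrite mxE; lra.
  by move: Nx; rewrite x0 N0; lra.
pose c1 := (y 0 1 - x 0 1) / d.
pose c2 := (x 0 0 - y 0 0) / d.
pose phi := fun w : 'rV[R]_2 => w 0 0 * c1 + w 0 1 * c2.
have phix : phi x = 1 by rewrite /phi /c1 /c2 /d; field.
have phiy : phi y = 1 by rewrite /phi /c1 /c2 /d; field.
have bound : forall w, `|phi w| <= N w.
  move=> w; have [s0|s0] := eqVneq (phi w) 0; first by rewrite s0 normr0.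
  pose u := (phi w)^-1 *: w.
  have Hu : u = p ((u 0 0 * y 0 1 - u 0 1 * y 0 0) / d).
    have sd : phi w * d = w 0 0 * (y 0 1 - x 0 1) + w 0 1 * (x 0 0 - y 0 0).
      by rewrite /phi /c1 /c2; field.
    have sd0 : w 0 0 * (y 0 1 - x 0 1) + w 0 1 * (x 0 0 - y 0 0) != 0.
      by rewrite -sd mulf_neq0.
    have dd : x 0 0 * y 0 1 - x 0 1 * y 0 0 != 0 := d0.
    by apply: rv2P; rewrite /u /p /phi /c1 /c2 /d !mxE; field; rewrite dd sd0.
  have hw : w = phi w *: u by rewrite /u scalerA mulfV // scale1r.
  have -> : N w = `|phi w| * N u by rewrite {1}hw NZ.
  rewrite Hu; have := L ((u 0 0 * y 0 1 - u 0 1 * y 0 0) / d).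
  have := normr_ge0 (phi w); nra.
pose A := fun z => Amx c1 c2 z.
have mA : forall w z, w *m A z = phi w *: z by move=> w z; rewrite /A mulA.
have ub : forall z, N z = 1 ->
    ubound [set N (w *m A z) | w in [set w | N w <= 1]] 1.
  move=> z Nz _ [w Hw <-]; rewrite mA NZ Nz mulr1; exact: le_trans (bound w) Hw.
have ne : forall z, [set N (w *m A z) | w in [set w | N w <= 1]] !=set0.
  by move=> z; exists (N (0 *m A z)), 0 => //=; rewrite N0 ler01.
have opA : forall z, N z = 1 -> opnorm N (A z) <= 1.
  by move=> z Nz; apply: ge_sup; [exact: ne | exact: ub].
pose m := p (1/2).
have Nm : N m = 1.
  apply/le_anti/andP; split; last exact: L.
  have := Ncvx (1/2) (1 - 1/2) x y ltac:(lra) ltac:(lra); rewrite Nx Ny; lra.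
have opT : opnorm N (A m) = 1.
  apply/le_anti/andP; split; first exact: opA.
  have hs : has_sup [set N (w *m A m) | w in [set w | N w <= 1]].
    by split; [exact: ne | exists 1; exact: ub].
  apply: (sup_upper_bound hs); exists x; first by rewrite /= Nx.
  by rewrite mA phix scale1r.
have [_ [_ Hext]] : extreme_contraction N (A m).
  apply: H => //; exists x, y; split; last split.
  - move=> a b /rowP e; have e1 := e 0; have e2 := e 1.
    rewrite !mxE in e1 e2; exact: K.
  - by split => //; rewrite mA phix scale1r Nm opT.
  - by split => //; rewrite mA phiy scale1r Nm opT.
have eqT : A m = (1/2) *: A x + (1 - 1/2) *: A y.
  apply/matrixP => i j; rewrite /A /Amx /m /p !mxE; ring.
have [e1 e2] := Hext (A x) (A y) (1/2) (opA x Nx) (opA y Ny)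
  ltac:(apply/andP; split; lra) eqT.
have : x *m A x = x *m A y by rewrite e1 e2.
by rewrite !mA phix !scale1r.
Qed.
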